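(* Let $G=(I\cup C,E)$ be a split graph whose clique vertices are labelled $1,\dots,k$ so that conditions (i)–(iii) below hold, and let $w$ be the word constructed below. If $a,b\in I$ are distinct, then $a$ and $b$ do not alternate in $w$.
   Context: Words: a word over a finite set $X$ is a finite sequence of elements of $X$; for a word $u$ and $S\subseteq X$, $u|_S$ is the subsequence of $u$ consisting of all occurrences of letters of $S$; $u^R$ is the reversal of $u$. Two letters $x,y$ alternate in $u$ if $u|_{\{x,y\}}$ is of the form $xyxy\cdots$ or $yxyx\cdots$ (of even or odd length); otherwise they do not alternate. For integers $a\le b$, $[a,b]=\{a,a+1,\dots,b\}$. Setting: $G=(I\cup C,E)$ is a split graph: $C$ induces a clique, $I$ induces an independent set, and $C$ is inclusion-wise maximal, i.e. no vertex of $I$ is adjacent to all vertices of $C$. The vertices of $C$ are labelled by $1,\dots,k$ where $k=|C|$, and for all $a,b\in I$: (i) either $N(a)=[1,m]\cup[n,k]$ for some $m<n$, or $N(a)=[l,r]$ for some $l\le r$; (ii) if $N(a)=[1,m]\cup[n,k]$ ($m<n$) and $N(b)=[l,r]$ ($l\le r$), then $l>m$ or $r<n$; (iii) if $N(a)=[1,m]\cup[n,k]$ and $N(b)=[1,m']\cup[n',k]$ ($m<n$, $m'<n'$), then $m'<n$ and $m<n'$. Let $B$ be the set of $a\in I$ whose neighbourhood is an integer interval $[l_a,r_a]$, and $A=I\setminus B$; for $a\in A$ write $N(a)=[1,m_a]\cup[n_a,k]$ with $m_a<n_a$. Construction of $w$: start with $p_1=p_2=p_3=12\cdots k$. Process the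 vertices of $I$ one at a time in an arbitrary fixed order; ''replace $y$ in $p$ by $yx$'' (resp. $xy$) means replacing the unique occurrence of the letter $y$ in $p$ by the two letters $yx$ (resp. $xy$). For $a\in A$: replace $m_a$ in $p_1$ by $m_a a$, and replace $n_a$ in $p_2$ by $a n_a$. For $a\in B$: replace $l_a$ in $p_1$ by $a l_a$, and replace $r_a$ in $p_2$ by $r_a a$. After all vertices of $I$ are processed, let $d=\max(\{1\}\cup\{m_a: a\in A\})$ and replace the letter $d$ in $p_3$ by the word $d\,(p_1|_A)^R$. Finally set $w=p_1\,(p_1|_B)^R\,p_2\,p_3$ (a $3$-uniform word over $V$). *)

(* Defs.v *)
From mathcomp Require Import all_boot.
Set Implicit Arguments. Unset Strict Implicit. Unset Printing Implicit Defensive.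

(* Letters of the word: inl i is clique vertex i (1 <= i <= k),
   inr a is the independent vertex a. *)
Notation letter T := (nat + T)%type.

Definition in_int (a b x : nat) : bool := (a <= x) && (x <= b).

Definition is_intervalb (k : nat) (N : nat -> bool) : bool :=
  has (fun l => has (fun r => (l <= r) &&
         all (fun x => N x == in_int l r x) (iota 1 k)) (iota 1 k)) (iota 1 k).

Definition restr (T : eqType) (S : pred T) (u : seq T) : seq T := filter S u.

Definition altw (T : Type) (x y : T) (n : nat) : seq T :=
  mkseq (fun i => if odd i then y else x) n.

Definition alternate (T : eqType) (x y : T) (u : seq T) : bool :=
  let s := restr (fun z => (z == x) || (z == y)) u in
  (s == altw x y (size s)) || (s == altw y x (size s)).

Definition repl_after (V : eqType) (y x : V) (p : seq V) : seq V :=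
  flatten [seq (if z == y then [:: y; x] else [:: z]) | z <- p].
Definition repl_before (V : eqType) (y x : V) (p : seq V) : seq V :=
  flatten [seq (if z == y then [:: x; y] else [:: z]) | z <- p].

Definition base_word (T : Type) (k : nat) : seq (letter T) :=
  [seq inl i | i <- iota 1 k].

Definition step (T : eqType) (inB : T -> bool) (m n l r : T -> nat)
    (pp : seq (letter T) * seq (letter T)) (a : T) :=
  let: (p1, p2) := pp in
  if inB a then (repl_before (inl (l a)) (inr a) p1, repl_after (inl (r a)) (inr a) p2)
  else (repl_after (inl (m a)) (inr a) p1, repl_before (inl (n a)) (inr a) p2).

Definition isA (T : Type) (inB : T -> bool) (z : letter T) : bool :=
  if z is inr a then ~~ inB a else false.
Definition isB (T : Type) (inB : T -> bool) (z : letter T) : bool :=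
  if z is inr a then inB a else false.

Definition word (T : eqType) (k : nat) (Iseq : seq T) (inB : T -> bool)
    (m n l r : T -> nat) : seq (letter T) :=
  let: (p1, p2) := foldl (step inB m n l r) (base_word T k, base_word T k) Iseq in
  let d := foldr maxn 1 [seq m a | a <- Iseq & ~~ inB a] in
  let p3 := flatten [seq (if z == inl d then inl d :: rev (restr (isA inB) p1)
                           else [:: z]) | z <- base_word T k] in
  p1 ++ rev (restr (isB inB) p1) ++ p2 ++ p3.

(* Main.v *)
Require Import Defs.
From mathcomp Require Import all_boot zify.
Set Implicit Arguments. Unset Strict Implicit.

Section Aux.
Variable T : eqType.
Implicit Types (p : seq (letter T)) (s : seq T).

Definition ins (e : bool) (y x : letter T) p :=
  if e then repl_before y x p else repl_after y x p.

Definition F (e : T -> bool) (t : T -> nat) p s :=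
  foldl (fun p c => ins (e c) (inl (t c)) (inr c) p) p s.

Lemma count_ins e y x z p :
  count_mem z (ins e y x p) = count_mem z p + (x == z) * count_mem y p.
Proof.
case: e; rewrite /ins /repl_before /repl_after; elim: p => [|u p IH] /=; try by rewrite muln0.
all: rewrite count_cat IH; case: (u =P y) => [->|_] /=; rewrite ?eqxx /=; lia.
Qed.

Lemma count_F_inl e t p s i : count_mem (inl i) (F e t p s) = count_mem (inl i) p.
Proof.
elim: s p => //= c s IH p; rewrite IH count_ins /=; lia.
Qed.

Lemma count_F_inr e t p s k a :
  (forall c, c \in s -> 1 <= t c <= k) ->
  (forall i, count_mem (inl i) p = (1 <= i <= k)) ->
  count_mem (inr a) (F e t p s) = count_mem (inr a) p + count_mem a s.
Proof.
elim: s p => [|c s IH] p Ht Hp /=; first by rewrite addn0.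
rewrite IH; last first.
- by move=> i; rewrite count_ins /= Hp /=; lia.
- by move=> c' Hc'; apply: Ht; rewrite inE Hc' orbT.
rewrite count_ins /= Hp Ht ?mem_head //.
case: eqP => [[->]|ne]; rewrite ?eqxx /=; try lia.
case: eqP => [Hca|_]; last lia. by case: ne; rewrite Hca.
Qed.

Lemma base_inl k i : count_mem (inl i) (base_word T k) = (1 <= i <= k).
Proof.
rewrite /base_word count_map.
rewrite (@eq_count _ _ (pred1 i)); last by move=> x /=.
by rewrite count_uniq_mem ?iota_uniq // mem_iota; case: i => //= i; rewrite add1n ltnS.
Qed.

Lemma base_inr k a : count_mem (inr a) (base_word T k) = 0.
Proof. by rewrite /base_word count_map; elim: (iota 1 k). Qed.

Lemma two_elem (X : eqType) (x y : X) (s : seq X) : x != y ->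
  all (fun z => (z == x) || (z == y)) s -> count_mem x s = 1 -> count_mem y s = 1 ->
  s = [:: x; y] \/ s = [:: y; x].
Proof.
move=> nxy Hall cx cy.
have : size s = 2.
  have -> : 2 = count_mem x s + count_mem y s by rewrite cx cy.
  rewrite -count_predUI.
  rewrite (@eq_count _ (predI _ _) pred0); last first.
    move=> z /=; case: (z =P x) => // ->; by rewrite (negbTE nxy).
  rewrite (_ : count pred0 s = 0) ?addn0; last by elim: (s).
  apply/esym/eqP; rewrite -all_count.
  by apply: sub_all Hall => z /=; rewrite !(eq_sym z).
case: s Hall cx cy => [|u [|v [|]]] //= /and3P [hu hv _] cx cy _.
case/orP: hu => /eqP hu; case/orP: hv => /eqP hv; subst; try by [left|right].
- by move: cx; rewrite eqxx.
- by move: cy; rewrite eqxx.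
Qed.

Lemma filter_ins_out (P : pred (letter T)) e y x p :
  ~~ P x -> filter P (ins e y x p) = filter P p.
Proof.
move=> nPx; case: e; rewrite /ins /repl_before /repl_after; elim: p => [|u p IH] //=.
all: rewrite filter_cat IH; case: (u =P y) => [->|_] /=; rewrite ?(negbTE nPx) //.
all: by case: (P _).
Qed.

Lemma filter_ins_in (P : pred (letter T)) e y x p :
  P x -> P y -> filter P (ins e y x p) = ins e y x (filter P p).
Proof.
move=> Px Py; case: e; rewrite /ins /repl_before /repl_after; elim: p => [|u p IH] //=.
all: rewrite filter_cat IH; case: (u =P y) => [->|ne] /=; rewrite ?Px ?Py /= ?eqxx //.
all: case: (P u) => //=; case: eqP => //.
Qed.

Lemma filter_F (P : pred (letter T)) e t p s :
  (forall c, c \in s -> P (inr c) -> P (inl (t c))) ->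
  filter P (F e t p s) = F e t (filter P p) (filter (fun c => P (inr c)) s).
Proof.
elim: s p => [|c s IH] p Ht //=.
case Pc: (P (inr c)) => /=.
- rewrite IH; last by move=> c' Hc'; apply: Ht; rewrite inE Hc' orbT.
  by rewrite filter_ins_in // Ht ?mem_head.
- rewrite IH; last by move=> c' Hc'; apply: Ht; rewrite inE Hc' orbT.
  by rewrite filter_ins_out ?Pc.
Qed.

Lemma filter_two s a b : uniq s -> a \in s -> b \in s -> a != b ->
  filter (fun c => (c == a) || (c == b)) s = [:: a; b] \/
  filter (fun c => (c == a) || (c == b)) s = [:: b; a].
Proof.
move=> us ia ib nab; apply: two_elem => //.
- exact: filter_all.
- rewrite count_filter (@eq_count _ _ (pred1 a)) ?count_uniq_mem ?ia //.
  by move=> z /=; case: (z =P a).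
- rewrite count_filter (@eq_count _ _ (pred1 b)) ?count_uniq_mem ?ib //.
  by move=> z /=; case: (z =P b); rewrite ?orbT ?andbF.
Qed.

Definition Qab (a b : T) (z : letter T) := (z == inr a) || (z == inr b).

Lemma shape_F e t k s a b : uniq s -> a \in s -> b \in s -> a != b ->
  (forall c, c \in s -> 1 <= t c <= k) ->
  filter (Qab a b) (F e t (base_word T k) s) = [:: inr a; inr b] \/
  filter (Qab a b) (F e t (base_word T k) s) = [:: inr b; inr a].
Proof.
move=> us ia ib nab Ht; apply: two_elem => //.
- exact: filter_all.
- rewrite count_filter (@eq_count _ _ (pred1 (inr a))); last first.
    by move=> z /=; rewrite /Qab; case: (z =P inr a).
  rewrite (@count_F_inr _ _ _ _ k) //; last by move=> i; apply: base_inl.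
  rewrite (_ : count_mem (inr a) (base_word T k) = 0); last by apply: base_inr.
  by rewrite count_uniq_mem ?ia.
- rewrite count_filter (@eq_count _ _ (pred1 (inr b))); last first.
    by move=> z /=; rewrite /Qab; case: (z =P inr b); rewrite ?orbT ?andbF.
  rewrite (@count_F_inr _ _ _ _ k) //; last by move=> i; apply: base_inl.
  rewrite (_ : count_mem (inr b) (base_word T k) = 0); last by apply: base_inr.
  by rewrite count_uniq_mem ?ib.
Qed.

Lemma filter_base2 k i j : 1 <= i -> i < j -> j <= k ->
  filter (fun x => (x == i) || (x == j)) (iota 1 k) = [:: i; j].
Proof.
move=> hi hij hj; apply: (@irr_sorted_eq _ ltn).
- by move=> ? ? ?; apply: ltn_trans.
- by move=> x; rewrite /= ltnn.
- by apply: sorted_filter; [apply: ltn_trans | apply: iota_ltn_sorted].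
- by rewrite /= hij.
move=> x; rewrite mem_filter mem_iota !inE.
case: (x =P i) => [->|_]; first by rewrite hi /=; lia.
case: (x =P j) => [->|_] //=; lia.
Qed.

Lemma order_F e t k s a b i j : uniq s -> a \in s -> b \in s -> a != b ->
  1 <= i -> i < j -> j <= k -> t a = i -> t b = j -> e a = false -> e b = true ->
  filter (Qab a b) (F e t (base_word T k) s) = [:: inr a; inr b].
Proof.
move=> us ia ib nab hi hij hj ta tb ea eb.
pose P z := Qab a b z || (z == inl i) || (z == inl j).
have -> : filter (Qab a b) (F e t (base_word T k) s) =
          filter (Qab a b) (filter P (F e t (base_word T k) s)).
  rewrite -filter_predI; apply: eq_filter => z /=.
  by rewrite /P; case: (Qab a b z).
rewrite filter_F; last first.
  move=> c _; rewrite /P /Qab.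
  case: (c =P a) => [-> _|na]; first by rewrite ta eqxx.
  case: (c =P b) => [-> _|nb]; first by rewrite tb eqxx orbT.
  change ((c == a) || (c == b) || false || false -> (inl (t c) == inl i :> letter T) || (inl (t c) == inl j :> letter T)).
  by rewrite (introF eqP na) (introF eqP nb).
have -> : filter P (base_word T k) = [:: inl i; inl j].
  rewrite /base_word filter_map (_ : [:: inl i; inl j] = map inl [:: i; j]) // -(filter_base2 hi hij hj).
  by congr map; apply: eq_filter => x.
have -> : filter (fun c => P (inr c)) s = filter (fun c => (c == a) || (c == b)) s.
  by apply: eq_filter => c; rewrite /P /Qab /= !orbF.
have nij : (j == i) = false by apply/negbTE; rewrite neq_ltn hij orbT.
have nba : (b == a) = false by apply/negbTE; rewrite eq_sym.
have nij' : (inl j == inl i :> letter T) = false := nij.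
have nji' : (inl i == inl j :> letter T) = false by rewrite eq_sym.
have nba' : (inr b == inr a :> letter T) = false := nba.
case: (filter_two us ia ib nab) => ->; rewrite /F /= ea eb ta tb /ins
   /repl_before /repl_after /= ?eqxx ?nij' ?nji' /= /Qab /= ?eqxx ?nba' //;
  rewrite ?nij' ?nji' /= ?eqxx ?nba' //.
Qed.

Lemma filter_comm (p q : pred (letter T)) u :
  filter p (filter q u) = filter q (filter p u).
Proof. by rewrite -!filter_predI; apply: eq_filter => z /=; rewrite andbC. Qed.

Lemma p3_filter (Q : pred (letter T)) d u k :
  (forall i, Q (inl i) = false) ->
  filter Q (flatten [seq (if z == inl d then inl d :: u else [:: z]) | z <- base_word T k])
  = if 1 <= d <= k then filter Q u else [::].
Proof.
move=> HQ.
have : uniq (iota 1 k) := iota_uniq 1 k.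
have -> : (1 <= d <= k) = (d \in iota 1 k).
  by rewrite mem_iota; case: d => //= d; rewrite add1n ltnS.
rewrite /base_word; elim: (iota 1 k) => [|x xs IH] //= /andP [nx ux].
rewrite filter_cat IH // inE.
have -> : (inl x == inl d :> letter T) = (x == d) by [].
case: (x =P d) => [<-|ne] /=.
  by rewrite eqxx HQ (negbTE nx) cats0.
by rewrite HQ eq_sym (introF eqP ne).
Qed.

Lemma d_range (L : seq nat) k : 1 <= k -> all (fun x => x <= k) L ->
  1 <= foldr maxn 1 L <= k.
Proof.
move=> hk; elim: L => [|x L IH] /=; first by rewrite hk.
move=> /andP [hx /IH /andP [h1 h2]]; rewrite leq_max h1 orbT /= geq_max hx h2 //.
Qed.
End Aux.


Lemma fold_step (T : eqType) (inB : T -> bool) (m n l r : T -> nat) p q s :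
  foldl (step inB m n l r) (p, q) s =
  (F inB (fun c => if inB c then l c else m c) p s,
   F (fun c => ~~ inB c) (fun c => if inB c then r c else n c) q s).
Proof.
elim: s p q => [|c s IH] p q //=.
rewrite /step; case: (inB c) => /=; by rewrite IH.
Qed.

Unset Implicit Arguments.
Theorem lemma3 (T : eqType) (k : nat) (Iseq : seq T) (N : T -> nat -> bool)
    (m n l r : T -> nat)
    (Huniq : uniq Iseq)
    (HN : forall a x, a \in Iseq -> N a x -> 1 <= x <= k)
    (Hmax : forall a, a \in Iseq -> exists2 x, 1 <= x <= k & ~~ N a x)
    (HB : forall a, a \in Iseq -> is_intervalb k (N a) ->
       [/\ 1 <= l a, l a <= r a, r a <= k &
           forall x, N a x = in_int (l a) (r a) x])
    (HA : forall a, a \in Iseq -> ~~ is_intervalb k (N a) ->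
       [/\ 1 <= m a, m a < n a, n a <= k &
           forall x, N a x = in_int 1 (m a) x || in_int (n a) k x])
    (Hii : forall a b, a \in Iseq -> b \in Iseq ->
       ~~ is_intervalb k (N a) -> is_intervalb k (N b) ->
       (l b > m a) || (r b < n a))
    (Hiii : forall a b, a \in Iseq -> b \in Iseq ->
       ~~ is_intervalb k (N a) -> ~~ is_intervalb k (N b) ->
       (m b < n a) && (m a < n b)) :
  forall a b, a \in Iseq -> b \in Iseq -> a != b ->
    ~~ alternate (inr a) (inr b)
         (word k Iseq (fun c => is_intervalb k (N c)) m n l r).
Proof.
move=> a b ia ib nab.
set inB := fun c => is_intervalb k (N c).
have Ht1 : forall c, c \in Iseq -> 1 <= (if inB c then l c else m c) <= k.
  move=> c ic; rewrite /inB; case: ifP => h.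
    by case: (HB c ic h) => *; apply/andP; split => //; apply: leq_trans; eauto.
  by case: (HA c ic (negbT h)) => *; apply/andP; split => //; lia.
have Ht2 : forall c, c \in Iseq -> 1 <= (if inB c then r c else n c) <= k.
  move=> c ic; rewrite /inB; case: ifP => h.
    by case: (HB c ic h) => *; apply/andP; split => //; lia.
  by case: (HA c ic (negbT h)) => *; apply/andP; split => //; lia.
have hk : 1 <= k by case: (Hmax a ia) => x /andP [h1 h2] _; lia.
rewrite /word fold_step.
set p1 := F _ _ _ _; set p2 := F _ _ _ _.
set d := foldr maxn 1 _.
have Hd : 1 <= d <= k.
  apply: d_range => //; apply/allP => x /mapP [c]; rewrite mem_filter => /andP [hc ic] ->.
  by case: (HA c ic hc) => *; lia.
rewrite /alternate /restr !filter_cat filter_rev p3_filter // Hd filter_rev.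
change (fun z => (z == inr a) || (z == inr b)) with (Qab a b).
rewrite !(filter_comm (Qab a b)).
have nab' : (inr a == inr b :> letter T) = false by apply/negbTE.
have nba' : (inr b == inr a :> letter T) = false by rewrite eq_sym; apply/negbTE.
have QE : Qab b a =1 Qab a b by move=> z; rewrite /Qab orbC.
have S1 := @shape_F _ inB _ _ _ _ _ Huniq ia ib nab Ht1.
have S2 := @shape_F _ (fun c => ~~ inB c) _ _ _ _ _ Huniq ia ib nab Ht2.
rewrite -/p1 -/p2 in S1 S2.
case HaB: (inB a); case HbB: (inB b).
- case: S1 => ->; case: S2 => -> /=; rewrite HaB HbB /altw /mkseq /= !eqseq_cons ?eqxx ?nab' ?nba' ?andbF //.
- case: (HB a ia HaB) => hla hlra hra _.
  case: (HA b ib (negbT HbB)) => hmb hmnb hnb _.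
  case/orP: (Hii b a ib ia (negbT HbB) HaB) => h.
  + have O1 : filter (Qab b a) p1 = [:: inr b; inr a].
      apply: (@order_F _ inB _ k Iseq b a (m b) (l a)) => //; try by [rewrite ?HaB ?HbB | rewrite eq_sym | lia].
    rewrite (eq_filter QE) in O1.
    rewrite O1; case: S2 => -> /=; rewrite HaB HbB /altw /mkseq /= !eqseq_cons ?eqxx ?nab' ?nba' ?andbF //.
  + have O2 : filter (Qab a b) p2 = [:: inr a; inr b].
      apply: (@order_F _ (fun c => ~~ inB c) _ k Iseq a b (r a) (n b)) => //; try by [rewrite ?HaB ?HbB | rewrite eq_sym | lia].
    rewrite O2; case: S1 => -> /=; rewrite HaB HbB /altw /mkseq /= !eqseq_cons ?eqxx ?nab' ?nba' ?andbF //.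
- case: (HA a ia (negbT HaB)) => hma hmna hna _.
  case: (HB b ib HbB) => hlb hlrb hrb _.
  case/orP: (Hii a b ia ib (negbT HaB) HbB) => h.
  + have O1 : filter (Qab a b) p1 = [:: inr a; inr b].
      apply: (@order_F _ inB _ k Iseq a b (m a) (l b)) => //; try by [rewrite ?HaB ?HbB | rewrite eq_sym | lia].
    rewrite O1; case: S2 => -> /=; rewrite HaB HbB /altw /mkseq /= !eqseq_cons ?eqxx ?nab' ?nba' ?andbF //.
  + have O2 : filter (Qab b a) p2 = [:: inr b; inr a].
      apply: (@order_F _ (fun c => ~~ inB c) _ k Iseq b a (r b) (n a)) => //; try by [rewrite ?HaB ?HbB | rewrite eq_sym | lia].
    rewrite (eq_filter QE) in O2.
    rewrite O2; case: S1 => -> /=; rewrite HaB HbB /altw /mkseq /= !eqseq_cons ?eqxx ?nab' ?nba' ?andbF //.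
- case: S1 => ->; case: S2 => -> /=; rewrite HaB HbB /altw /mkseq /= !eqseq_cons ?eqxx ?nab' ?nba' ?andbF //.
Qed.
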